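(* Let $H\in\mathbb{R}^{n\times d}$, $\Sigma\in\mathbb{R}^{n\times n}$ symmetric positive definite, $y\in\mathbb{R}^n$, $J\ge2$, and let $v_i^{(j)}$ be deterministic EKI iterates $$v_{i+1}^{(j)}=v_i^{(j)}+\Gamma_iH^\top(H\Gamma_iH^\top+\Sigma)^{-1}(y-Hv_i^{(j)}),$$ with $\Gamma_i$ the empirical ensemble covariance. Let $v^*=(H^\top\Sigma^{-1}H)^\dagger H^\top\Sigma^{-1}y$ and $\omega_i^{(j)}=v_i^{(j)}-v^*$. Then for all $i\ge0$, $\omega_{i+1}^{(j)}=\mathbb{M}_i\omega_i^{(j)}$ with $\mathbb{M}_i=(I+\Gamma_iH^\top\Sigma^{-1}H)^{-1}$.
   Context: Empirical covariance $\Gamma_i=\frac1{J-1}\sum_j(v_i^{(j)}-\bar v_i)(v_i^{(j)}-\bar v_i)^\top$, $\bar v_i=\frac1J\sum_jv_i^{(j)}$; $\dagger$ denotes the Moore–Penrose pseudoinverse. *)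

(* Defs.v *)
From HB Require Import structures.
From mathcomp Require Import all_boot all_order all_algebra.
Set Implicit Arguments. Unset Strict Implicit. Unset Printing Implicit Defensive.
Import Order.TTheory GRing.Theory Num.Theory.
Local Open Scope ring_scope.

Definition moore_penrose (R : realFieldType) (m n : nat)
    (A : 'M[R]_(m, n)) (X : 'M[R]_(n, m)) : Prop :=
  [/\ A *m X *m A = A, X *m A *m X = X,
      (A *m X)^T = A *m X & (X *m A)^T = X *m A].

Definition spd (R : realFieldType) (n : nat) (S : 'M[R]_n) : Prop :=
  S^T = S /\ forall x : 'cV[R]_n, x != 0 -> 0 < (x^T *m S *m x) 0 0.

Definition ens_mean (R : realFieldType) (d J : nat) (v : 'I_J -> 'cV[R]_d)
  : 'cV[R]_d := (J%:R)^-1 *: \sum_(j < J) v j.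

Definition emp_cov (R : realFieldType) (d J : nat) (v : 'I_J -> 'cV[R]_d)
  : 'M[R]_d :=
  ((J.-1)%:R)^-1 *: \sum_(j < J) ((v j - ens_mean v) *m (v j - ens_mean v)^T).

(* Main.v *)
Require Import Defs.
From HB Require Import structures.
From mathcomp Require Import all_boot all_order all_algebra.
From mathcomp Require Import lra.
Import Order.TTheory GRing.Theory Num.Theory.
Local Open Scope ring_scope.
Set Implicit Arguments. Unset Strict Implicit.

Lemma pd_unit (R : realFieldType) (n : nat) (S : 'M[R]_n) :
  (forall x : 'cV[R]_n, x != 0 -> 0 < (x^T *m S *m x) 0 0) -> S \in unitmx.
Proof.
move=> hS; rewrite unitmxE unitfE; apply/negP => /det0P [r r0 rS].
have := hS r^T; rewrite trmx_eq0 trmxK r0 rS mul0mx mxE ltxx => h.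
by have := h isT.
Qed.

Lemma emp_cov_psd (R : realFieldType) (d J : nat) (u : 'I_J -> 'cV[R]_d)
  (w : 'cV[R]_d) : 0 <= (w^T *m emp_cov u *m w) 0 0.
Proof.
rewrite /emp_cov -scalemxAr -scalemxAl mxE mulr_ge0 ?invr_ge0 ?ler0n //.
rewrite mulmx_sumr mulmx_suml summxE sumr_ge0 // => j _.
set a := w^T *m (u j - ens_mean u).
have -> : w^T *m ((u j - ens_mean u) *m (u j - ens_mean u)^T) *m w = a *m a^T.
  by rewrite /a trmx_mul trmxK !mulmxA.
clearbody a; by rewrite mxE big_ord1 mxE -expr2 sqr_ge0.
Qed.

Lemma pushthrough (R : realFieldType) (n d : nat) (B : 'M[R]_(d, n))
  (H : 'M[R]_(n, d)) (S G : 'M[R]_n) :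
  S \in unitmx -> G \in unitmx -> H *m B = G - S ->
  (1%:M + B *m invmx S *m H) *m (B *m invmx G) = B *m invmx S.
Proof.
move=> SU GU hHB.
rewrite mulmxDl mul1mx -!mulmxA (mulmxA H) hHB mulmxBl mulmxV //.
rewrite mulmxBr mulmx1 mulmxA mulVmx // mul1mx mulmxBr.
by rewrite addrC subrK.
Qed.

Lemma Kunit (R : realFieldType) (n d : nat) (B : 'M[R]_(d, n))
  (H : 'M[R]_(n, d)) (S G : 'M[R]_n) :
  S \in unitmx -> G \in unitmx -> H *m B = G - S ->
  (1%:M + B *m invmx S *m H) \in unitmx.
Proof.
move=> SU GU hHB.
have : (1%:M + B *m invmx S *m H) *m (1%:M - B *m invmx G *m H) = 1%:M.
  by rewrite mulmxBr mulmx1 (mulmxA _ (B *m _)) pushthrough // addrK.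
by case/mulmx1_unit.
Qed.
Lemma mp_range (R : realFieldType) (n d : nat) (H : 'M[R]_(n, d)) (S : 'M[R]_n)
  (P : 'M[R]_d) : spd S -> S \in unitmx ->
  moore_penrose (H^T *m invmx S *m H) P ->
  H^T *m invmx S *m H *m P *m (H^T *m invmx S) = H^T *m invmx S.
Proof.
move=> [ST Spos] SU [mp1 _ mp3 _].
set Si := invmx S.
set A := H^T *m Si *m H.
set Q : 'M[R]_d := 1%:M - A *m P.
set M := Q *m (H^T *m Si).
have QA : Q *m A = 0 by rewrite /Q mulmxBl mul1mx mp1 subrr.
have QT : Q^T = Q by rewrite /Q linearB /= trmx1 mp3.
have SiT : Si^T = Si by rewrite /Si trmx_inv ST.
have MSM : M *m S *m M^T = 0.
  rewrite /M !trmx_mul trmxK SiT QT.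
  rewrite -!mulmxA (mulmxA Si S) mulVmx // mul1mx.
  have -> : Q *m (H^T *m (Si *m (H *m Q))) = Q *m A *m Q by rewrite /A !mulmxA.
  by rewrite QA mul0mx.
have M0 : M = 0.
  apply/row_matrixP => k; rewrite row0; apply/eqP/negPn/negP => rk.
  have := Spos (row k M)^T; rewrite trmx_eq0 rk trmxK => /(_ isT).
  have -> : (row k M *m S *m (row k M)^T) 0 0 = (M *m S *m M^T) k k.
    rewrite tr_row -row_mul !mxE; apply: eq_bigr => l _; rewrite !mxE.
    by [].
  by rewrite MSM mxE ltxx.
apply/eqP; rewrite eq_sym -subr_eq0.
have := M0; rewrite /M /Q mulmxBl mul1mx => ->.
by [].
Qed.

Lemma zmod_aux (V : zmodType) (a b c e : V) : a + b + (c - b) - (e + c) = a - e.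
Proof. by rewrite addrACA subrr addr0 opprD addrACA subrr addr0. Qed.

Unset Implicit Arguments.

Theorem proposition3p12 (R : realFieldType) (n d J : nat)
  (H : 'M[R]_(n, d)) (Sigma : 'M[R]_n) (y : 'cV[R]_n)
  (v : nat -> 'I_J -> 'cV[R]_d)
  (P : 'M[R]_d) (vstar : 'cV[R]_d) :
  spd Sigma ->
  (2 <= J)%N ->
  (forall i (j : 'I_J),
     v i.+1 j = v i j + emp_cov (v i) *m H^T
                  *m invmx (H *m emp_cov (v i) *m H^T + Sigma)
                  *m (y - H *m v i j)) ->
  moore_penrose (H^T *m invmx Sigma *m H) P ->
  vstar = P *m H^T *m invmx Sigma *m y ->
  forall i (j : 'I_J),
    (1%:M + emp_cov (v i) *m H^T *m invmx Sigma *m H) \in unitmx /\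
    v i.+1 j - vstar =
      invmx (1%:M + emp_cov (v i) *m H^T *m invmx Sigma *m H)
        *m (v i j - vstar).
Proof.
move=> hS hJ hv hmp hvs i j.
have SU := pd_unit (proj2 hS).
rewrite hv.
set Gm := emp_cov (v i).
set B := Gm *m H^T.
set G := H *m Gm *m H^T + Sigma.
have GU : G \in unitmx.
  apply: pd_unit => x x0.
  have h2 := proj2 hS x x0. have := emp_cov_psd (v i) (H^T *m x).
  rewrite -/Gm trmx_mul trmxK => h1.
  rewrite /G mulmxDr mulmxDl mxE.
  move: h1 h2; rewrite !mulmxA => h1 h2; lra.
have hHB : H *m B = G - Sigma by rewrite /G /B mulmxA addrK.
have KU := Kunit SU GU hHB.
split => //.
set K := 1%:M + B *m invmx Sigma *m H.
rewrite -[LHS](mulKmx KU); congr (_ *m _).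
have PT := pushthrough SU GU hHB.
have MR := mp_range hS SU hmp.
have E : B *m invmx Sigma *m H *m vstar = B *m invmx Sigma *m y.
  rewrite hvs /B.
  by move: (congr1 (fun X => Gm *m X *m y) MR); rewrite !mulmxA.
rewrite mulmxBr mulmxDr (mulmxA K) PT /K !mulmxDl !mul1mx E mulmxBr.
rewrite !mulmxA.
exact: zmod_aux.
Qed.
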